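(* Let $\mathcal{D}=\{1,\ldots,d^{\max}\}$, $m_d>0$ with $\sum_d m_d=1$, $d^{\mathtt{avg}}=\sum_d d\,m_d$, $\alpha,\gamma\in(0,1)$, $\beta_\mathtt{P}^d\in(0,1)$, and $c_\mathtt{P},L>0$. For $\mathbf{y}=(y^d)_{d\in\mathcal{D}}\in[0,1]^{d^{\max}}$ let $\Theta(\mathbf{y}):=\sum_{d\in\mathcal{D}}\frac{d m_d}{d^{\mathtt{avg}}}\beta_\mathtt{P}^d y^d$, and define thresholds $\Theta^d_{th}:=\frac{c_\mathtt{P}}{L(1-\alpha)d}$ for $d\in\mathcal{D}$, with $\Theta^{d^{\max}+1}_{th}:=0$. Assume there is a degree $d$ with $\Theta^d_{th}<1$ and let $d_{\min}$ be the smallest such degree. Define the intervals $\mathcal{I}_{d^{\max}+1}:=[0,\Theta^{d^{\max}}_{th})$, $\mathcal{I}_{d_{\min}}:=(\Theta^{d_{\min}}_{th},1]$, and $\mathcal{I}_d:=(\Theta^d_{th},\Theta^{d-1}_{th})$ for $d\in\{d_{\min}+1,\ldots,d^{\max}\}$. Call $\mathbf{y}\in[0,1]^{d^{\max}}$ an equilibrium of the switched dynamics if for every $d\in\mathcal{D}$ there exists $z^d_{\mathtt{S}}\in[0,1]$ with $z^d_{\mathtt{S}}=1$ if $\Theta(\mathbf{y})<\Theta^d_{th}$, $z^d_{\mathtt{S}}=0$ if $\Theta(\mathbf{y})>\Theta^d_{th}$ (and $z^d_{\mathtt{S}}$ arbitrary in $[0,1]$ if $\Theta(\mathbf{y})=\Theta^d_{th}$),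 such that $$0=-\gamma y^d+(1-y^d)\big(z^d_{\mathtt{S}}+\alpha(1-z^d_{\mathtt{S}})\big)\,d\,\Theta(\mathbf{y}).$$ An endemic equilibrium is a nonzero equilibrium; $\mathbf{y}=0$ is the disease-free equilibrium. Let $\mathcal{R}(d^\star)$ and $\Theta_{\mathtt{EE}}(d^\star)$ (for $d^\star\in\{1,\ldots,d^{\max}+1\}$) be as defined in the context, and let $\mathbf{y}_{\mathtt{EE}}(d^\star)$ denote the corresponding endemic equilibrium of the fixed-$d^\star$ dynamics when $\mathcal{R}(d^\star)>1$. Then: (1) If $\mathcal{R}(d^{\max}+1)\le 1$, the disease-free equilibrium is the only equilibrium of the switched dynamics. (2) Suppose $\mathcal{R}(d^{\max}+1)>1$, and let $d^{\mathtt{eq}}$ be the smallest element of $\{d_{\min},\ldots,d^{\max}+1\}$ with $\Theta_{\mathtt{EE}}(d^{\mathtt{eq}})>\Theta^{d^{\mathtt{eq}}}_{th}$. (a) If $\Theta_{\mathtt{EE}}(d^{\mathtt{eq}})\in\mathcal{I}_{d^{\mathtt{eq}}}$, then $\mathbf{y}_{\mathtt{EE}}(d^{\mathtt{eq}})$ is the unique endemic equilibrium of the switched dynamics. (b) If $\Theta_{\mathtt{EE}}(d^{\mathtt{eq}})\ge\Theta^{d^{\mathtt{eq}}-1}_{th}$, then the switched dynamics has a unique endemic equilibrium; it satisfies $\Theta(\mathbf{y})=\Theta^{d^{\mathtt{eq}}-1}_{th}$ and $y^d=\frac{s_d\,d\,\Theta^{d^{\mathtt{eq}}-1}_{th}}{\gamma+s_d\,d\,\Theta^{d^{\mathtt{eq}}-1}_{th}}$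 for all $d$, where $s_d=1$ for $d<d^{\mathtt{eq}}-1$, $s_d=\alpha$ for $d>d^{\mathtt{eq}}-1$, and $s_{d^{\mathtt{eq}}-1}=\bar z+\alpha(1-\bar z)$ for some $\bar z\in[0,1]$.
   Context: For $d^\star\in\{1,\ldots,d^{\max}+1\}$: $$\mathcal{R}(d^\star):=\sum_{d=1}^{d^\star-1}\frac{d^2 m_d\beta_\mathtt{P}^d}{d^{\mathtt{avg}}\gamma}+\sum_{d=d^\star}^{d^{\max}}\frac{\alpha\, d^2 m_d\beta_\mathtt{P}^d}{d^{\mathtt{avg}}\gamma}.$$ The fixed-$d^\star$ dynamics is $\dot y^d=-\gamma y^d+(1-y^d)\kappa_d\,d\,\Theta(\mathbf{y})$ with $\kappa_d=1$ for $d<d^\star$ and $\kappa_d=\alpha$ for $d\ge d^\star$; when $\mathcal{R}(d^\star)>1$ it has a unique nonzero equilibrium $\mathbf{y}_{\mathtt{EE}}(d^\star)\in[0,1]^{d^{\max}}$. $\Theta_{\mathtt{EE}}(d^\star):=\Theta(\mathbf{y}_{\mathtt{EE}}(d^\star))$ if $\mathcal{R}(d^\star)>1$, which is the unique $\Theta>0$ with $1=\sum_{d<d^\star}\frac{d m_d}{d^{\mathtt{avg}}}\frac{d\beta_\mathtt{P}^d}{\gamma+d\Theta}+\sum_{d\ge d^\star}\frac{d m_d}{d^{\mathtt{avg}}}\frac{\alpha d\beta_\mathtt{P}^d}{\gamma+\alpha d\Theta}$; and $\Theta_{\mathtt{EE}}(d^\star):=0$ if $\mathcal{R}(d^\star)\le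 1$. The switched dynamics models the SIS epidemic when susceptible agents of degree $d$ adopt protection (reducing infection probability by factor $\alpha$) exactly when $\Theta(\mathbf{y})$ exceeds $\Theta^d_{th}$, and infected agents always adopt protection (transmission rate $\beta_\mathtt{P}^d$). *)

(* Defs.v *)
From Stdlib Require Import ClassicalEpsilon.
From mathcomp Require Import all_boot all_order all_algebra.
From mathcomp Require Import reals.
Set Implicit Arguments. Unset Strict Implicit. Unset Printing Implicit Defensive.
Import Order.TTheory GRing.Theory Num.Theory.
Local Open Scope ring_scope.

(* Degrees are natural numbers d in D = {1,...,dmax}.  Degree-indexed data
   (m_d, beta_P^d, y^d) are functions nat -> R; only their values on D matter. *)
Section SIS.
Variables (R : realType) (dmax : nat) (m beta : nat -> R) (alpha gamma cP L : R).

Definition inD (d : nat) : Prop := (1 <= d <= dmax)%N.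

Definition davg : R := \sum_(1 <= d < dmax.+1) d%:R * m d.

Definition Theta (y : nat -> R) : R :=
  \sum_(1 <= d < dmax.+1) (d%:R * m d / davg) * beta d * y d.

Definition Theta_th (d : nat) : R :=
  if d == dmax.+1 then 0 else cP / (L * (1 - alpha) * d%:R).

Definition kappa (dstar d : nat) : R := if (d < dstar)%N then 1 else alpha.

Definition Rnum (dstar : nat) : R :=
  \sum_(1 <= d < dmax.+1) kappa dstar d * (d%:R ^+ 2 * m d * beta d) / (davg * gamma).

Definition in_box (y : nat -> R) : Prop := forall d, inD d -> 0 <= y d <= 1.

Definition nonzero_vec (y : nat -> R) : Prop := exists d, inD d /\ y d <> 0.

Definition eqD (y1 y2 : nat -> R) : Prop := forall d, inD d -> y1 d = y2 d.

Definition fixed_equilibrium (dstar : nat) (y : nat -> R) : Prop :=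
  in_box y /\
  forall d, inD d ->
    0 = - gamma * y d + (1 - y d) * kappa dstar d * d%:R * Theta y.

Definition y_EE (dstar : nat) : nat -> R :=
  epsilon (inhabits (fun _ : nat => (0 : R)))
    (fun y => fixed_equilibrium dstar y /\ nonzero_vec y).

Definition Theta_EE (dstar : nat) : R :=
  if 1 < Rnum dstar then
    epsilon (inhabits (0 : R))
      (fun t => 0 < t /\
        1 = \sum_(1 <= d < dmax.+1)
              (d%:R * m d / davg) * (kappa dstar d * d%:R * beta d)
                / (gamma + kappa dstar d * d%:R * t))
  else 0.

Definition switched_equilibrium (y : nat -> R) : Prop :=
  in_box y /\
  forall d, inD d ->
    exists z : R, 0 <= z <= 1 /\
      (Theta y < Theta_th d -> z = 1) /\
      (Theta_th d < Theta y -> z = 0) /\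
      0 = - gamma * y d + (1 - y d) * (z + alpha * (1 - z)) * d%:R * Theta y.

Definition endemic_equilibrium (y : nat -> R) : Prop :=
  switched_equilibrium y /\ nonzero_vec y.

Definition in_I (dmin d : nat) (t : R) : Prop :=
  if d == dmax.+1 then 0 <= t < Theta_th dmax
  else if d == dmin then Theta_th dmin < t <= 1
  else Theta_th d < t < Theta_th d.-1.

End SIS.

(* Main.v *)
From Pilot Require Import Defs.
From mathcomp Require Import all_boot all_order all_algebra.
From mathcomp Require Import reals.
From mathcomp Require Import all_classical all_reals all_analysis.
From mathcomp Require Import ring lra zify.
From Stdlib Require ClassicalEpsilon.
Import Pilot.Defs.
Import Order.TTheory GRing.Theory Num.Theory.
Import numFieldNormedType.Exports.
Local Open Scope ring_scope.
Set Implicit Arguments. Unset Strict Implicit. Unset Printing Implicit Defensive.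

Lemma cont_sum (R : realType) (a n : nat) (f : nat -> R -> R) :
  (forall d, (a <= d < n)%N -> continuous (f d)) ->
  continuous (fun t => \sum_(a <= d < n) f d t).
Proof.
move=> hf; elim: n hf => [|n IH] hf.
  by move=> x; rewrite (_ : (fun t => _) = fun=> 0);
    [exact: cst_continuous|apply/funext=> t; rewrite big_geq].
case: (leqP a n) => han.
  rewrite (_ : (fun t => _) = (fun t => \sum_(a <= d < n) f d t) + f n); last first.
    by apply/funext=> t; rewrite big_nat_recr.
  move=> x; apply: continuousD.
    by apply: IH => d /andP[h1 h2]; apply: hf; rewrite h1 /= ltnS ltnW.
  by apply: hf; rewrite han /=.
by move=> x; rewrite (_ : (fun t => _) = fun=> 0);
  [exact: cst_continuous|apply/funext=> t; rewrite big_geq].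
Qed.

Lemma cont_rat (R : realType) (a b g : R) : 0 < g -> 0 <= b ->
  continuous (fun t : R => a / (g + b * `|t|)).
Proof.
move=> hg hb x.
have -> : (fun t : R => a / (g + b * `|t|)) = (fun=> a) \* (fun t => (g + b * `|t|)^-1).
  by apply/funext.
apply: continuousM; first exact: cst_continuous.
apply: continuousV.
  by rewrite gt_eqF // ltr_pwDl // mulr_ge0.
apply: continuousD; first exact: cst_continuous.
have -> : (fun t : R => b * `|t|) = (fun=> b) \* (fun t => `|t|) by apply/funext.
apply: continuousM; first exact: cst_continuous.
exact: norm_continuous.
Qed.

Lemma choice_D (R : realType) (P : nat -> Prop) (Q : nat -> R -> Prop) :
  (forall d, P d -> exists z : R, Q d z) ->
  exists f : nat -> R, forall d, P d -> Q d (f d).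
Proof.
move=> h; exists (fun d => ClassicalEpsilon.epsilon (inhabits 0) (Q d)).
move=> d hd; apply: ClassicalEpsilon.epsilon_spec; exact: h.
Qed.

Section Proof.
Variables (R : realType) (dmax : nat) (m beta : nat -> R) (alpha gamma cP L : R).
Hypothesis hm_pos : forall d, inD dmax d -> 0 < m d.
Hypothesis halpha : 0 < alpha < 1.
Hypothesis hgamma : 0 < gamma < 1.
Hypothesis hbeta : forall d, inD dmax d -> 0 < beta d < 1.
Hypothesis hcP : 0 < cP.
Hypothesis hL : 0 < L.
Hypothesis hdmax : (1 <= dmax)%N.

Local Notation DD := (inD dmax).
Local Notation thr := (Theta_th dmax alpha cP L).
Local Notation Th := (Theta dmax m beta).
Local Notation dav := (davg dmax m).

Definition H (s : nat -> R) (t : R) := \sum_(1 <= d < dmax.+1)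
  (d%:R * m d / dav) * (s d * d%:R * beta d) / (gamma + s d * d%:R * t).
Definition yof (s : nat -> R) t d := s d * d%:R * t / (gamma + s d * d%:R * t).
Definition compat (s : nat -> R) t := forall d, DD d ->
  alpha <= s d <= 1 /\ (t < thr d -> s d = 1) /\ (thr d < t -> s d = alpha).

Lemma inDP d : (1 <= d < dmax.+1)%N -> DD d.
Proof. by rewrite /inD ltnS. Qed.

Lemma dpos d : DD d -> 0 < d%:R :> R.
Proof. by case/andP => h _; rewrite ltr0n. Qed.

Lemma sum_nonneg a b (F : nat -> R) : (forall i, (a <= i < b)%N -> 0 <= F i) ->
  0 <= \sum_(a <= i < b) F i.
Proof. by move=> h; rewrite big_nat; apply: sumr_ge0. Qed.

Lemma davg_gt0 : 0 < dav.
Proof.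
rewrite /davg; apply: (@lt_le_trans _ _ (\sum_(1 <= i < 2) i%:R * m i)).
  by rewrite big_nat1 mul1r; apply: hm_pos; rewrite /inD leqnn.
rewrite [X in _ <= X](big_cat_nat _ (n := 2)) //= lerDl; apply: sum_nonneg => i /andP[h1 h2].
apply: mulr_ge0; first by rewrite ler0n.
apply/ltW/hm_pos/inDP; rewrite h2 andbT; exact: leq_trans h1.
Qed.

Lemma sum_w : \sum_(1 <= d < dmax.+1) (d%:R * m d / dav) = 1.
Proof. by rewrite -mulr_suml divff // gt_eqF // davg_gt0. Qed.

Lemma w_pos d : DD d -> 0 < d%:R * m d / dav.
Proof. move=> hd; by rewrite divr_gt0 ?davg_gt0 // mulr_gt0 ?dpos ?hm_pos. Qed.

Lemma sum_strict (F G : nat -> R) d0 : (forall d, DD d -> F d <= G d) -> DD d0 ->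
  F d0 < G d0 -> \sum_(1 <= d < dmax.+1) F d < \sum_(1 <= d < dmax.+1) G d.
Proof.
move=> hle hd0 hlt; rewrite -subr_gt0 -sumrB.
case/andP: hd0 => h1 h2.
rewrite (big_cat_nat _ (n := d0)) //=; last by rewrite ltnW.
rewrite [X in _ + X]big_ltn; last by rewrite ltnS.
rewrite addrCA; apply: (@lt_le_trans _ _ (G d0 - F d0)); first by rewrite subr_gt0.
rewrite lerDl.
apply: addr_ge0; apply: sum_nonneg => i /andP[i1 i2]; rewrite subr_ge0; apply: hle;
  apply: inDP; apply/andP; split => //.
all: lia.
Qed.

Lemma th_D d : DD d -> thr d = cP / (L * (1 - alpha) * d%:R).
Proof.
move=> hd; rewrite /Theta_th; case: eqP => // hd'.
by move: hd; rewrite /inD hd' ltnn andbF.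
Qed.

Lemma th_pos d : DD d -> 0 < thr d.
Proof.
move=> hd; rewrite th_D // divr_gt0 // !mulr_gt0 ?dpos // subr_gt0.
by case/andP: halpha.
Qed.

Lemma th_lt d1 d2 : DD d1 -> DD d2 -> (d1 < d2)%N -> thr d2 < thr d1.
Proof.
move=> h1 h2 h12; rewrite !th_D //.
have hK : 0 < L * (1 - alpha) by rewrite mulr_gt0 // subr_gt0; case/andP: halpha.
rewrite ltr_pM2l //.
have ha1 : 0 < 1 - alpha by rewrite subr_gt0; case/andP: halpha.
rewrite ltf_pV2 ?posrE ?mulr_gt0 ?dpos //.
by rewrite ltr_pM2l // ltr_nat.
Qed.

Lemma th_le d1 d2 : DD d1 -> DD d2 -> (d1 <= d2)%N -> thr d2 <= thr d1.
Proof.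
move=> h1 h2; rewrite leq_eqVlt => /orP[/eqP -> //|h]; exact/ltW/th_lt.
Qed.

Lemma th_inj d1 d2 : DD d1 -> DD d2 -> thr d1 = thr d2 -> d1 = d2.
Proof.
move=> h1 h2 he; case: (ltngtP d1 d2) => // h.
- by move: (th_lt h1 h2 h); rewrite he ltxx.
- by move: (th_lt h2 h1 h); rewrite he ltxx.
Qed.

Lemma divle (x1 y1 x2 y2 : R) : 0 < y1 -> 0 < y2 -> 0 <= x2 * y1 - x1 * y2 -> x1 / y1 <= x2 / y2.
Proof. by move=> h1 h2; rewrite subr_ge0 => h; rewrite ler_pdivrMr // mulrAC ler_pdivlMr. Qed.

Lemma divlt (x1 y1 x2 y2 : R) : 0 < y1 -> 0 < y2 -> 0 < x2 * y1 - x1 * y2 -> x1 / y1 < x2 / y2.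
Proof. by move=> h1 h2; rewrite subr_gt0 => h; rewrite ltr_pdivrMr // mulrAC ltr_pdivlMr. Qed.

Lemma gmono a b s1 s2 t1 t2 : 0 < a -> 0 < b -> 0 < s1 -> s1 <= s2 ->
  0 <= t2 -> t2 <= t1 ->
  s1 * a * b / (gamma + s1 * a * t1) <= s2 * a * b / (gamma + s2 * a * t2).
Proof.
move=> ha hb hs1 hs12 ht2 ht12.
have hg : 0 < gamma by case/andP: hgamma.
have ht1 : 0 <= t1 by exact: le_trans ht12.
have hY1 : 0 < gamma + s1 * a * t1.
  by rewrite ltr_pwDl // !mulr_ge0 // ?ltW.
have hY2 : 0 < gamma + s2 * a * t2.
  by rewrite ltr_pwDl // !mulr_ge0 // ltW // (lt_le_trans hs1).
apply: divle => //.
have -> : s2 * a * b * (gamma + s1 * a * t1) - s1 * a * b * (gamma + s2 * a * t2)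
  = a * b * ((s2 - s1) * gamma + s1 * s2 * a * (t1 - t2)) by ring.
have hs2 : 0 < s2 by exact: lt_le_trans hs12.
apply: mulr_ge0; first by apply: mulr_ge0; apply: ltW.
have hA : 0 <= (s2 - s1) * gamma by apply: mulr_ge0; [rewrite subr_ge0|exact: ltW].
have hB : 0 <= s1 * s2 * a * (t1 - t2).
  by apply: mulr_ge0; [rewrite !mulr_ge0 // ltW|rewrite subr_ge0].
exact: addr_ge0.
Qed.

Lemma gstrict a b s1 s2 t1 t2 : 0 < a -> 0 < b -> 0 < s1 -> s1 <= s2 ->
  0 <= t2 -> t2 <= t1 -> (s1 < s2 \/ t2 < t1) ->
  s1 * a * b / (gamma + s1 * a * t1) < s2 * a * b / (gamma + s2 * a * t2).
Proof.
move=> ha hb hs1 hs12 ht2 ht12 hor.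
have hg : 0 < gamma by case/andP: hgamma.
have hs2 : 0 < s2 by exact: lt_le_trans hs12.
have ht1 : 0 <= t1 by exact: le_trans ht12.
have hY1 : 0 < gamma + s1 * a * t1.
  by rewrite ltr_pwDl // !mulr_ge0 // ?ltW.
have hY2 : 0 < gamma + s2 * a * t2.
  by rewrite ltr_pwDl // !mulr_ge0 // ltW.
apply: divlt => //.
have -> : s2 * a * b * (gamma + s1 * a * t1) - s1 * a * b * (gamma + s2 * a * t2)
  = a * b * ((s2 - s1) * gamma + s1 * s2 * a * (t1 - t2)) by ring.
apply: mulr_gt0; first exact: mulr_gt0.
have hA : 0 <= (s2 - s1) * gamma by apply: mulr_ge0; [rewrite subr_ge0|exact: ltW].
have hB : 0 <= s1 * s2 * a * (t1 - t2).
  by apply: mulr_ge0; [rewrite !mulr_ge0 // ltW|rewrite subr_ge0].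
case: hor => h.
  have hA' : 0 < (s2 - s1) * gamma by apply: mulr_gt0; rewrite ?subr_gt0.
  exact: ltr_pwDl.
have hB' : 0 < s1 * s2 * a * (t1 - t2) by rewrite !mulr_gt0 // subr_gt0.
exact: ltr_pwDr.
Qed.

Lemma term_split (w x y : R) : w * x / y = w * (x / y).
Proof. by rewrite mulrA. Qed.

Lemma Hcmp s1 s2 t1 t2 : (forall d, DD d -> 0 < s1 d <= s2 d) -> 0 <= t2 -> t2 <= t1 ->
  H s1 t1 <= H s2 t2.
Proof.
move=> hs ht2 ht12; apply: ler_sum_nat => d /inDP hd.
case/andP: (hs d hd) => h1 h2.
rewrite (term_split _ (s1 d * _ * _)) (term_split _ (s2 d * _ * _)) ler_pM2l ?w_pos //.
apply: gmono => //; first exact: dpos.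
by case/andP: (hbeta hd).
Qed.

Lemma Hstrict s1 s2 t1 t2 : (forall d, DD d -> 0 < s1 d <= s2 d) -> 0 <= t2 -> t2 <= t1 ->
  (t2 < t1 \/ exists d0, DD d0 /\ s1 d0 < s2 d0) -> H s1 t1 < H s2 t2.
Proof.
move=> hs ht2 ht12 [hlt|[d0 [hd0 hlt]]].
  apply: ltr_sum_nat => // d /inDP hd.
  case/andP: (hs d hd) => h1 h2.
  rewrite (term_split _ (s1 d * _ * _)) (term_split _ (s2 d * _ * _)) ltr_pM2l ?w_pos //.
  apply: gstrict => //; [exact: dpos|by case/andP: (hbeta hd)|by right].
apply: (sum_strict (d0 := d0)) => //.
  move=> d hd; case/andP: (hs d hd) => h1 h2.
  rewrite (term_split _ (s1 d * _ * _)) (term_split _ (s2 d * _ * _)) ler_pM2l ?w_pos //.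
  apply: gmono => //; first exact: dpos.
  by case/andP: (hbeta hd).
case/andP: (hs d0 hd0) => h1 h2.
rewrite (term_split _ (s1 d0 * _ * _)) (term_split _ (s2 d0 * _ * _)) ltr_pM2l ?w_pos //.
apply: gstrict => //; [exact: dpos|by case/andP: (hbeta hd0)|by left].
Qed.

Local Notation kap := (kappa alpha).

Lemma kappa_pos k d : 0 < kap k d <= 1.
Proof.
rewrite /kappa; case: ifP => _; first by rewrite ltr01 lexx.
by case/andP: halpha => -> /ltW.
Qed.

Lemma Rnum_eq k : H (kap k) 0 = Rnum dmax m beta alpha gamma k.
Proof.
rewrite /H /Rnum; apply: eq_big_nat => d _.
have hd : dav != 0 by rewrite gt_eqF // davg_gt0.
have hg : gamma != 0 by rewrite gt_eqF //; case/andP: hgamma.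
rewrite mulr0 addr0; field.
by rewrite hd hg.
Qed.

Lemma H_lt1 s t : (forall d, DD d -> 0 < s d <= 1) -> 1 <= t -> H s t < 1.
Proof.
move=> hs ht; rewrite -sum_w; apply: ltr_sum_nat => // d /inDP hd.
rewrite term_split -[X in _ < X]mulr1 ltr_pM2l ?w_pos //.
case/andP: (hs d hd) => h1 h2; case/andP: (hbeta hd) => hb1 hb2.
have hsd : 0 < s d * d%:R by rewrite mulr_gt0 // dpos.
have hg : 0 < gamma by case/andP: hgamma.
have hsdt : 0 <= s d * d%:R * t by rewrite mulr_ge0 ?ltW // (lt_le_trans ltr01).
rewrite ltr_pdivrMr ?mul1r; last by rewrite ltr_pwDl.
have : s d * d%:R * beta d < s d * d%:R * t.
  by rewrite ltr_pM2l //; exact: lt_le_trans hb2 ht.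
move=> h; lra.
Qed.

Lemma root_ex s : (forall d, DD d -> 0 < s d <= 1) -> 1 < H s 0 ->
  exists t, 0 < t /\ H s t = 1.
Proof.
move=> hs h0.
pose f (t : R) := \sum_(1 <= d < dmax.+1) (d%:R * m d / dav) * (s d * d%:R * beta d)
  / (gamma + s d * d%:R * `|t|).
have fc : continuous f.
  apply: cont_sum => d /inDP hd; apply: cont_rat; first by case/andP: hgamma.
  by case/andP: (hs d hd) => h1 _; rewrite mulr_ge0 // ltW // dpos.
have f0 : f 0 = H s 0 by rewrite /f normr0.
have f1 : f 1 = H s 1 by rewrite /f normr1.
have h1 : H s 1 < 1 by apply: H_lt1.
have [c hc fc1] : exists2 c, c \in `[0, 1] & f c = 1.
  apply: IVT; first exact: ler01.
    exact: continuous_subspaceT.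
  by rewrite f0 f1 ge_min le_max (ltW h1) (ltW h0) orbT.
move: hc; rewrite in_itv /= => /andP[c0 c1].
have fcH : f c = H s c by rewrite /f ger0_norm.
exists c; split; last by rewrite -fcH.
rewrite lt_def c0 andbT; apply/eqP => hc0.
by move: fc1; rewrite fcH hc0 => h; move: h0; rewrite h ltxx.
Qed.

Local Notation EN := (endemic_equilibrium dmax m beta alpha gamma cP L).
Local Notation FE := (fixed_equilibrium dmax m beta alpha gamma).
Local Notation TEE := (Theta_EE dmax m beta alpha gamma).
Local Notation RN := (Rnum dmax m beta alpha gamma).
Local Notation yEE := (y_EE dmax m beta alpha gamma).

Lemma ha0 : 0 < alpha. Proof. by case/andP: halpha. Qed.
Lemma ha1 : alpha < 1. Proof. by case/andP: halpha. Qed.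
Lemma hg0 : 0 < gamma. Proof. by case/andP: hgamma. Qed.

Lemma Th_ge0 y : in_box dmax y -> 0 <= Th y.
Proof.
move=> hb; apply: sum_nonneg => d /inDP hd.
case/andP: (hb d hd) => h0 _; case/andP: (hbeta hd) => hb0 _.
apply: mulr_ge0 => //; apply: mulr_ge0; [exact: ltW (w_pos hd) | exact: ltW].
Qed.

Lemma yof_pos s t d : DD d -> 0 < s d -> 0 <= t -> 0 < gamma + s d * d%:R * t.
Proof.
move=> hd hs ht; have hg := hg0.
by rewrite ltr_pwDl // mulr_ge0 // ltW // mulr_gt0 // dpos.
Qed.

Lemma Th_yof s t : (forall d, DD d -> 0 < s d) -> 0 <= t -> Th (yof s t) = t * H s t.
Proof.
move=> hs ht; rewrite /Theta /H mulr_sumr; apply: eq_big_nat => d /inDP hd.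
have hY := yof_pos hd (hs d hd) ht.
have hdv : dav != 0 by rewrite gt_eqF // davg_gt0.
rewrite /yof; field.
by rewrite hdv (gt_eqF hY).
Qed.

Lemma eq_of s y : in_box dmax y -> nonzero_vec dmax y -> (forall d, DD d -> 0 < s d) ->
  (forall d, DD d -> 0 = - gamma * y d + (1 - y d) * s d * d%:R * Th y) ->
  0 < Th y /\ H s (Th y) = 1 /\ (forall d, DD d -> y d = yof s (Th y) d).
Proof.
move=> hb [d0 [hd0 hy0]] hs he.
have hg := hg0.
have ht : 0 < Th y.
  rewrite lt_def Th_ge0 // andbT; apply/eqP => h.
  have := he d0 hd0; rewrite h mulr0 addr0 => /esym /eqP.
  rewrite mulNr oppr_eq0 mulf_eq0 (gt_eqF hg) /= => /eqP; exact: hy0.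
have hy : forall d, DD d -> y d = yof s (Th y) d.
  move=> d hd; have hY := yof_pos hd (hs d hd) (ltW ht).
  rewrite /yof -[y d](mulfK (lt0r_neq0 hY)); congr (_ / _).
  have := he d hd; lra.
have hT : Th y = Th (yof s (Th y)) by apply: eq_big_nat => d /inDP hd; rewrite -hy.
split=> //; split=> //.
apply: (mulfI (lt0r_neq0 ht)); rewrite mulr1 -Th_yof ?ltW //; by rewrite -?hT.
Qed.

Lemma of_eq s t : 0 < t -> (forall d, DD d -> 0 < s d <= 1) -> H s t = 1 ->
  in_box dmax (yof s t) /\ nonzero_vec dmax (yof s t) /\ Th (yof s t) = t /\
  (forall d, DD d -> 0 = - gamma * yof s t d + (1 - yof s t d) * s d * d%:R * t).
Proof.
move=> ht hs hH.
have hs' : forall d, DD d -> 0 < s d by move=> d /hs /andP[].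
have hg := hg0.
have hp : forall d, DD d -> 0 < yof s t d.
  move=> d hd; rewrite /yof divr_gt0 ?yof_pos ?(ltW ht) ?hs' //.
  by rewrite mulr_gt0 // mulr_gt0 ?hs' ?dpos.
split.
  move=> d hd; rewrite ltW ?hp //=.
  rewrite /yof ler_pdivrMr ?yof_pos ?(ltW ht) ?hs' // mul1r; lra.
split.
  exists 1%N; split; first by rewrite /inD leqnn hdmax.
  by apply/eqP; rewrite gt_eqF // hp // /inD leqnn hdmax.
split; first by rewrite Th_yof ?hH ?mulr1 ?ltW.
move=> d hd; have hY := yof_pos hd (hs' d hd) (ltW ht).
rewrite /yof; field.
exact: lt0r_neq0 hY.
Qed.

Lemma Th_eqD y1 y2 : eqD dmax y1 y2 -> Th y1 = Th y2.
Proof. by move=> h; apply: eq_big_nat => d /inDP hd; rewrite h. Qed.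

Lemma endemic_eqD y1 y2 : eqD dmax y1 y2 -> EN y1 -> EN y2.
Proof.
move=> h [[hb he] [d0 [hd0 hn]]]; split; last by exists d0; rewrite -h.
split; first by move=> d hd; rewrite -h //; exact: hb.
move=> d hd; have [z hz] := he d hd; exists z; rewrite -h // -(Th_eqD h); exact: hz.
Qed.

Lemma char_sw y : EN y -> exists s, compat s (Th y) /\ 0 < Th y /\ H s (Th y) = 1 /\
  (forall d, DD d -> y d = yof s (Th y) d).
Proof.
move=> [[hb he] hnz].
have [zf hz] := choice_D he.
pose s d := zf d + alpha * (1 - zf d).
have ha := ha0; have ha' := ha1.
have hc : compat s (Th y).
  move=> d hd; have [/andP[z0 z1] [h1 [h2 _]]] := hz d hd.
  split; first by apply/andP; split; rewrite /s; nra.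
  split; first by move=> /h1 h; rewrite /s h subrr mulr0 addr0.
  by move=> /h2 h; rewrite /s h subr0 mulr1 add0r.
have hs : forall d, DD d -> 0 < s d.
  by move=> d hd; have [/andP[a _] _] := hc d hd; exact: lt_le_trans ha a.
have [ht [hH hy]] := eq_of hb hnz hs (fun d hd => (hz d hd).2.2.2).
by exists s.
Qed.

Lemma sw_of s t : 0 < t -> compat s t -> H s t = 1 -> EN (yof s t) /\ Th (yof s t) = t.
Proof.
move=> ht hc hH.
have ha := ha0; have ha' := ha1.
have hs : forall d, DD d -> 0 < s d <= 1.
  move=> d hd; have [/andP[h1 h2] _] := hc d hd; rewrite h2 andbT; exact: lt_le_trans h1.
have [hb [hnz [hTh he]]] := of_eq ht hs hH.
split=> //; split=> //; split=> // d hd.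
have [/andP[h1 h2] [h3 h4]] := hc d hd.
have hna : 1 - alpha != 0 by rewrite subr_eq0 eq_sym lt_eqF.
have hna' : 0 < 1 - alpha by rewrite subr_gt0.
rewrite hTh; exists ((s d - alpha) / (1 - alpha)); split.
  apply/andP; split; first by rewrite divr_ge0 // ?subr_ge0 // ltW.
  by rewrite ler_pdivrMr // mul1r; lra.
split; first by move=> h; rewrite (h3 h) divff.
split; first by move=> h; rewrite (h4 h) subrr mul0r.
have -> : (s d - alpha) / (1 - alpha) + alpha * (1 - (s d - alpha) / (1 - alpha)) = s d.
  by field.
exact: he.
Qed.

Lemma compat_le s1 s2 t1 t2 : t1 < t2 -> compat s1 t1 -> compat s2 t2 ->
  forall d, DD d -> s2 d <= s1 d.
Proof.
move=> h12 c1 c2 d hd.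
have [/andP[a1 b1] [e1 f1]] := c1 d hd; have [/andP[a2 b2] [e2 f2]] := c2 d hd.
case: (ltgtP t2 (thr d)) => h.
- by rewrite e1 ?e2 //; exact: lt_trans h12 h.
- by rewrite f2.
- by rewrite e1 // -h.
Qed.

Lemma compat_pos s t : compat s t -> forall d, DD d -> 0 < s d.
Proof. by move=> c d hd; have [/andP[a _] _] := c d hd; exact: lt_le_trans ha0 a. Qed.

Lemma unique_s s1 s2 t d0 : 0 < t -> compat s1 t -> compat s2 t -> DD d0 ->
  s1 d0 < s2 d0 -> H s1 t < H s2 t.
Proof.
move=> ht c1 c2 hd0 hlt.
have hth : thr d0 = t.
  have [_ [e1 f1]] := c1 d0 hd0; have [_ [e2 f2]] := c2 d0 hd0.
  case: (ltgtP t (thr d0)) => // h.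
  - by move: hlt; rewrite e1 // e2 // ltxx.
  - by move: hlt; rewrite f1 // f2 // ltxx.
apply: Hstrict; last by right; exists d0.
- move=> d hd; rewrite (compat_pos c1 hd) /=.
  have [_ [e1 f1]] := c1 d hd; have [_ [e2 f2]] := c2 d hd.
  case: (ltgtP t (thr d)) => h.
  + by rewrite e1 ?e2.
  + by rewrite f1 ?f2.
  + have -> : d = d0 by apply: th_inj => //; rewrite hth.
    exact: ltW.
- exact: ltW.
- by [].
Qed.

Lemma unique_sw s1 s2 t1 t2 : 0 < t1 -> 0 < t2 -> compat s1 t1 -> compat s2 t2 ->
  H s1 t1 = 1 -> H s2 t2 = 1 -> t1 = t2 /\ forall d, DD d -> s1 d = s2 d.
Proof.
move=> ht1 ht2 c1 c2 h1 h2.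
have et : t1 = t2.
  case: (ltgtP t1 t2) => // h.
  - have : H s2 t2 < H s1 t1.
      apply: Hstrict; [|exact: ltW|exact: ltW|by left].
      move=> d hd; rewrite (compat_pos c2 hd) /=; exact: compat_le h c1 c2 d hd.
    by rewrite h1 h2 ltxx.
  - have : H s1 t1 < H s2 t2.
      apply: Hstrict; [|exact: ltW|exact: ltW|by left].
      move=> d hd; rewrite (compat_pos c1 hd) /=; exact: compat_le h c2 c1 d hd.
    by rewrite h1 h2 ltxx.
split=> // d hd; subst t2.
case: (ltgtP (s1 d) (s2 d)) => // h.
- by move: (unique_s ht1 c1 c2 hd h); rewrite h1 h2 ltxx.
- by move: (unique_s ht1 c2 c1 hd h); rewrite h1 h2 ltxx.
Qed.

Lemma unique_fixed s t1 t2 : (forall d, DD d -> 0 < s d) -> 0 < t1 -> 0 < t2 ->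
  H s t1 = 1 -> H s t2 = 1 -> t1 = t2.
Proof.
move=> hs ht1 ht2 h1 h2; case: (ltgtP t1 t2) => // h.
- have : H s t2 < H s t1.
    by apply: Hstrict; [move=> d hd; rewrite hs //= lexx|exact: ltW|exact: ltW|left].
  by rewrite h1 h2 ltxx.
- have : H s t1 < H s t2.
    by apply: Hstrict; [move=> d hd; rewrite hs //= lexx|exact: ltW|exact: ltW|left].
  by rewrite h1 h2 ltxx.
Qed.

Lemma EE_spec k : 1 < RN k -> 0 < TEE k /\ H (kap k) (TEE k) = 1.
Proof.
move=> hR.
have [t [ht hHt]] : exists t, 0 < t /\ H (kap k) t = 1.
  apply: root_ex => [d _|]; [exact: kappa_pos | by rewrite Rnum_eq].
rewrite /Theta_EE hR.
have := ClassicalEpsilon.epsilon_spec (inhabits (0:R))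
  (fun t => 0 < t /\ 1 = H (kap k) t) (ex_intro _ t (conj ht (esym hHt))).
by case=> h1 h2; split; [exact: h1 | exact: esym h2].
Qed.

Lemma EE_zero k : ~~ (1 < RN k) -> TEE k = 0.
Proof. by move=> h; rewrite /Theta_EE (negbTE h). Qed.

Lemma yEE_spec k : 1 < RN k -> FE k (yEE k) /\ nonzero_vec dmax (yEE k) /\
  eqD dmax (yEE k) (yof (kap k) (TEE k)).
Proof.
move=> hR; have [ht hH] := EE_spec hR.
have hk : forall d, DD d -> 0 < kap k d <= 1 by move=> d _; exact: kappa_pos.
have hk' : forall d, DD d -> 0 < kap k d by move=> d _; case/andP: (kappa_pos k d).
have [hb [hnz [hTh he]]] := of_eq ht hk hH.
have ex : exists y, FE k y /\ nonzero_vec dmax y.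
  exists (yof (kap k) (TEE k)); split=> //; split=> // d hd; rewrite hTh; exact: he.
have [hfe hnz'] : FE k (yEE k) /\ nonzero_vec dmax (yEE k) :=
  ClassicalEpsilon.epsilon_spec (inhabits (fun _ : nat => (0:R)))
    (fun y => FE k y /\ nonzero_vec dmax y) ex.
have [hfb hfeq] := hfe.
have [ht' [hH' hy']] := eq_of hfb hnz' hk' hfeq.
have et := unique_fixed hk' ht' ht hH' hH.
split=> //; split=> //.
by move=> d hd; rewrite hy' // et.
Qed.

Lemma th_ge0 d : 0 <= thr d.
Proof.
rewrite /Theta_th; case: eqP => _ //.
have ha := ha0; have ha' := ha1.
apply: divr_ge0; first exact: ltW.
apply: mulr_ge0; last exact: ler0n.
by apply: mulr_ge0; [exact: ltW|rewrite subr_ge0; exact: ltW].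
Qed.

Lemma cont_u : continuous (fun z : R => `|z| + alpha * (1 - `|z|)).
Proof.
move=> x.
have -> : (fun z : R => `|z| + alpha * (1 - `|z|)) =
  (fun z : R => `|z|) + ((fun=> alpha) \* ((fun=> 1) - (fun z : R => `|z|))).
  by apply/funext.
apply: continuousD; first exact: norm_continuous.
apply: continuousM; first exact: cst_continuous.
apply: continuousB; first exact: cst_continuous.
exact: norm_continuous.
Qed.

Lemma cont_term (F : R -> R) (c a b t : R) : continuous F -> (forall z, 0 < F z) ->
  0 <= a -> 0 <= t ->
  continuous (fun z => c * (F z * a * b) / (gamma + F z * a * t)).
Proof.
move=> hF hpos ha ht x.
have -> : (fun z => c * (F z * a * b) / (gamma + F z * a * t)) =
  ((fun=> c) \* ((F \* (fun=> a)) \* (fun=> b))) \*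
  (fun z => (gamma + F z * a * t)^-1) by apply/funext.
apply: continuousM.
  apply: continuousM; first exact: cst_continuous.
  apply: continuousM; last exact: cst_continuous.
  by apply: continuousM; [exact: hF|exact: cst_continuous].
apply: continuousV.
  by rewrite gt_eqF // ltr_pwDl ?hg0 // !mulr_ge0 // ltW.
apply: continuousD; first exact: cst_continuous.
have -> : (fun z => F z * a * t) = (F \* (fun=> a)) \* (fun=> t) by apply/funext.
apply: continuousM; last exact: cst_continuous.
by apply: continuousM; [exact: hF|exact: cst_continuous].
Qed.

Lemma main (dmin : nat) (hdmin_D : inD dmax dmin)
  (hdmin_lt : Theta_th dmax alpha cP L dmin < 1)
  (hdmin_min : forall d, inD dmax d -> Theta_th dmax alpha cP L d < 1 -> (dmin <= d)%N) :
  (Rnum dmax m beta alpha gamma dmax.+1 <= 1 ->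
     switched_equilibrium dmax m beta alpha gamma cP L (fun _ => 0) /\
     forall y, switched_equilibrium dmax m beta alpha gamma cP L y ->
       forall d, inD dmax d -> y d = 0)
  /\
  (1 < Rnum dmax m beta alpha gamma dmax.+1 ->
   forall deq : nat,
     (dmin <= deq <= dmax.+1)%N ->
     Theta_th dmax alpha cP L deq < Theta_EE dmax m beta alpha gamma deq ->
     (forall d, (dmin <= d < deq)%N ->
        ~ (Theta_th dmax alpha cP L d < Theta_EE dmax m beta alpha gamma d)) ->
     (in_I dmax alpha cP L dmin deq (Theta_EE dmax m beta alpha gamma deq) ->
        endemic_equilibrium dmax m beta alpha gamma cP L
          (y_EE dmax m beta alpha gamma deq) /\
        forall y, endemic_equilibrium dmax m beta alpha gamma cP L y ->
          eqD dmax y (y_EE dmax m beta alpha gamma deq))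
     /\
     ((1 < deq)%N ->
      Theta_th dmax alpha cP L deq.-1 <= Theta_EE dmax m beta alpha gamma deq ->
      exists y,
        endemic_equilibrium dmax m beta alpha gamma cP L y /\
        (forall y', endemic_equilibrium dmax m beta alpha gamma cP L y' -> eqD dmax y' y) /\
        Theta dmax m beta y = Theta_th dmax alpha cP L deq.-1 /\
        exists zbar : R, 0 <= zbar <= 1 /\
          forall d, inD dmax d ->
            let s := if (d < deq.-1)%N then 1
                     else if (deq.-1 < d)%N then alpha
                     else zbar + alpha * (1 - zbar) in
            y d = s * d%:R * Theta_th dmax alpha cP L deq.-1
                  / (gamma + s * d%:R * Theta_th dmax alpha cP L deq.-1))).
Proof.
have ha := ha0; have ha' := ha1; have hg := hg0.
have hge1 : forall d, DD d -> (d < dmin)%N -> 1 <= thr d.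
  move=> d hd hlt; case: (ltP (thr d) 1) => // h.
  by have := hdmin_min d hd h; rewrite leqNgt hlt.
have kapD : forall d, DD d -> kap dmax.+1 d = 1.
  by move=> d hd; rewrite /kappa ltnS; case/andP: hd => _ ->.
split.
  move=> hR1.
  have Th0 : Th (fun=> 0) = 0 by rewrite /Theta big1 // => i _; rewrite mulr0.
  split.
    split; first by move=> d _; rewrite lexx ler01.
    move=> d hd; exists 1; split; first by rewrite ler01 lexx.
    split; first by [].
    split; last by rewrite Th0 !mulr0 addr0.
    by move=> h; move: h; rewrite Th0 => /(lt_trans (th_pos hd)); rewrite ltxx.
  move=> y hy d hd; case: (eqVneq (y d) 0) => // hne.
  have hEN : EN y by split=> //; exists d; split=> //; apply/eqP.
  have [s [cs [ts [Hs _]]]] := char_sw hEN.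
  have : H s (Th y) < H (kap dmax.+1) 0.
    apply: Hstrict; [|by []|exact: ltW|by left].
    move=> d' hd'; rewrite (compat_pos cs hd') kapD //=.
    by have [/andP[_ ->] _] := cs d' hd'.
  by rewrite Hs Rnum_eq => h; move: (lt_le_trans h hR1); rewrite ltxx.
move=> hR1 deq hdeq hgt hmin.
have hRdeq : 1 < RN deq.
  case: (boolP (1 < RN deq)) => // h.
  by move: hgt; rewrite EE_zero // => h'; move: (le_lt_trans (th_ge0 deq) h'); rewrite ltxx.
have [htp hHt] := EE_spec hRdeq.
have hdmin1 : (1 <= dmin)%N by case/andP: hdmin_D.
have hdmindmax : (dmin <= dmax)%N by case/andP: hdmin_D.
case/andP: hdeq => hdeq1 hdeq2.
split.
  move=> hI.
  have F2 : forall d, DD d -> (deq <= d)%N -> thr d < TEE deq.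
    move=> d hd hdd; apply: le_lt_trans hgt; apply: th_le => //.
    by move: hd; rewrite /inD => /andP[_ h]; apply/andP; split; clear -hdd h hdeq1 hdmin1; lia.
  have F1 : forall d, DD d -> (d < deq)%N -> TEE deq <= thr d.
    move=> d hd hdd; move: hI; rewrite /in_I.
    case: eqP => [hE|hN].
      move=> /andP[_ h]; apply/ltW/(lt_le_trans h); apply: th_le => //.
        by rewrite /inD leqnn andbT.
      by case/andP: hd.

    case: eqP => [hE2|hN2].
      move=> /andP[_ h]; apply: (le_trans h); apply: hge1 => //; by rewrite -hE2.
    move=> /andP[_ h]; apply/ltW/(lt_le_trans h); apply: th_le => //.
      by rewrite /inD; clear -hN hN2 hdeq1 hdeq2 hdmin1; lia.
    by clear -hdd; lia.
  have hc : compat (kap deq) (TEE deq).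
    move=> d hd; split.
      by rewrite /kappa; case: ifP => _; rewrite ?lexx ?ltW.
    case: (ltnP d deq) => hdd.
      split; first by rewrite /kappa hdd.
      by move=> h; move: (lt_le_trans h (F1 d hd hdd)); rewrite ltxx.
    split; last by rewrite /kappa ltnNge hdd.
    by move=> h; move: (lt_trans h (F2 d hd hdd)); rewrite ltxx.
  have [hfe [hnz heq]] := yEE_spec hRdeq.
  have [hEN _] := sw_of htp hc hHt.
  split; first by apply: endemic_eqD hEN => d hd; rewrite heq.
  move=> y hy; have [s [cs [ts [Hs hys]]]] := char_sw hy.
  have [et es] := unique_sw ts htp cs hc Hs hHt.
  by move=> d hd; rewrite hys // heq // /yof es // et.
move=> h1deq hle.
have hdeq_gt : (dmin < deq)%N.
  rewrite ltn_neqAle hdeq1 andbT; apply/eqP => hE.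
  have hd0D : DD deq.-1 by rewrite /inD; clear -h1deq hdeq2 hE hdmindmax; lia.
  have h1 : 1 <= thr deq.-1.
    case: (ltP (thr deq.-1) 1) => // h.
    by have := hdmin_min _ hd0D h => hh; clear -hh hE h1deq; lia.
  have := H_lt1 (s := kap deq) (t := TEE deq) (fun d _ => kappa_pos deq d) (le_trans h1 hle).
  by rewrite hHt ltxx.
have hd0D : DD deq.-1 by rewrite /inD; clear -hdeq_gt hdmin1 hdeq2; lia.
have hts : 0 < thr deq.-1 := th_pos hd0D.
pose sz (z : R) d := if (d < deq.-1)%N then 1 else if (deq.-1 < d)%N then alpha
  else z + alpha * (1 - z).
have hsz1 : forall d, sz 1 d = kap deq d.
  move=> d; rewrite /sz /kappa; case: (ltngtP d deq.-1) => h.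
  - by rewrite (_ : (d < deq)%N) //; clear -h; lia.
  - by rewrite (_ : (d < deq)%N = false) //; apply/negbTE; rewrite -leqNgt; clear -h; lia.
  - by rewrite (_ : (d < deq)%N) ?subrr ?mulr0 ?addr0 //; clear -h h1deq; lia.
have hsz0 : forall d, sz 0 d = kap deq.-1 d.
  move=> d; rewrite /sz /kappa; case: (ltngtP d deq.-1) => h //;
  by rewrite ?ltnn ?subr0 ?mulr1 ?add0r.
have hup : 1 <= H (sz 1) (thr deq.-1).
  rewrite (_ : H (sz 1) _ = H (kap deq) (thr deq.-1)); last first.
    by apply: eq_big_nat => d _; rewrite hsz1.
  rewrite -hHt; apply: Hcmp => //; last exact: ltW.
  by move=> d _; rewrite lexx andbT; case/andP: (kappa_pos deq d).
have hlow : H (sz 0) (thr deq.-1) <= 1.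
  rewrite (_ : H (sz 0) _ = H (kap deq.-1) (thr deq.-1)); last first.
    by apply: eq_big_nat => d _; rewrite hsz0.
  have hk : forall d, DD d -> 0 < kap deq.-1 d <= kap deq.-1 d.
    by move=> d _; rewrite lexx andbT; case/andP: (kappa_pos deq.-1 d).
  case: (boolP (1 < RN deq.-1)) => hR0.
    have [h0p h0H] := EE_spec hR0.
    have hnl : ~ (thr deq.-1 < TEE deq.-1) by apply: hmin; clear -hdeq_gt; lia.
    rewrite -h0H; apply: Hcmp => //; first exact: ltW.
    by rewrite leNgt; apply/negP.
  apply: (le_trans (Hcmp hk (lexx 0) (ltW hts))).
  by rewrite Rnum_eq leNgt.
pose phi (z : R) := H (sz `|z|) (thr deq.-1).
have phic : continuous phi.
  apply: cont_sum => d /inDP hd; rewrite /sz.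
  case: (d < deq.-1)%N; first by move=> x; exact: cst_continuous.
  case: (deq.-1 < d)%N; first by move=> x; exact: cst_continuous.
  apply: cont_term; [exact: cont_u| |exact: ler0n|exact: ltW].
  move=> z; have h0 := normr_ge0 z.
  have -> : `|z| + alpha * (1 - `|z|) = alpha + (1 - alpha) * `|z| by ring.
  by rewrite ltr_pwDl // mulr_ge0 // subr_ge0 ltW.
have [zb hzb phiz] : exists2 c, c \in `[0, 1] & phi c = 1.
  apply: IVT; first exact: ler01.
    exact: continuous_subspaceT.
  by rewrite /phi normr0 normr1 ge_min le_max hup hlow orbT.
move: hzb; rewrite in_itv /= => /andP[zb0 zb1].
have hHz : H (sz zb) (thr deq.-1) = 1 by rewrite -phiz /phi ger0_norm.
have hcz : compat (sz zb) (thr deq.-1).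
  move=> d hd; case: (ltngtP d deq.-1) => h.
  - rewrite /sz h; split; first by rewrite lexx ltW.
    split=> // h'; move: (lt_trans h' (th_lt hd hd0D h)); rewrite ltxx //.
  - rewrite /sz ltnNge (ltnW h) /= h; split; first by rewrite lexx ltW.
    split=> // h'; move: (lt_trans h' (th_lt hd0D hd h)); rewrite ltxx //.
  - rewrite /sz h ltnn; split.
      have -> : zb + alpha * (1 - zb) = alpha + (1 - alpha) * zb by ring.
      have hm : (1 - alpha) * zb <= 1 - alpha.
        by rewrite -[X in _ <= X]mulr1 ler_wpM2l // subr_ge0 ltW.
      have hm0 : 0 <= (1 - alpha) * zb by rewrite mulr_ge0 // subr_ge0 ltW.
      by apply/andP; split; lra.
    by split=> h'; move: h'; rewrite ltxx.
have [hEN hThy] := sw_of hts hcz hHz.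
exists (yof (sz zb) (thr deq.-1)); split=> //; split.
  move=> y' hy'; have [s' [cs' [ts' [Hs' hys']]]] := char_sw hy'.
  have [et es] := unique_sw ts' hts cs' hcz Hs' hHz.
  by move=> d hd; rewrite hys' // /yof es // et.
split=> //.
by exists zb; split; [rewrite zb0 zb1|].
Qed.

End Proof.

Theorem theorem1 (R : realType) (dmax : nat) (m beta : nat -> R)
  (alpha gamma cP L : R)
  (hm_pos : forall d, inD dmax d -> 0 < m d)
  (hm_sum : \sum_(1 <= d < dmax.+1) m d = 1)
  (halpha : 0 < alpha < 1) (hgamma : 0 < gamma < 1)
  (hbeta : forall d, inD dmax d -> 0 < beta d < 1)
  (hcP : 0 < cP) (hL : 0 < L)
  (dmin : nat) (hdmin_D : inD dmax dmin)
  (hdmin_lt : Theta_th dmax alpha cP L dmin < 1)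
  (hdmin_min : forall d, inD dmax d -> Theta_th dmax alpha cP L d < 1 -> (dmin <= d)%N) :
  (* (1) *)
  (Rnum dmax m beta alpha gamma dmax.+1 <= 1 ->
     switched_equilibrium dmax m beta alpha gamma cP L (fun _ => 0) /\
     forall y, switched_equilibrium dmax m beta alpha gamma cP L y ->
       forall d, inD dmax d -> y d = 0)
  /\
  (* (2) *)
  (1 < Rnum dmax m beta alpha gamma dmax.+1 ->
   forall deq : nat,
     (dmin <= deq <= dmax.+1)%N ->
     Theta_th dmax alpha cP L deq < Theta_EE dmax m beta alpha gamma deq ->
     (forall d, (dmin <= d < deq)%N ->
        ~ (Theta_th dmax alpha cP L d < Theta_EE dmax m beta alpha gamma d)) ->
     (* (2a) *)
     (in_I dmax alpha cP L dmin deq (Theta_EE dmax m beta alpha gamma deq) ->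
        endemic_equilibrium dmax m beta alpha gamma cP L
          (y_EE dmax m beta alpha gamma deq) /\
        forall y, endemic_equilibrium dmax m beta alpha gamma cP L y ->
          eqD dmax y (y_EE dmax m beta alpha gamma deq))
     /\
     (* (2b) *)
     ((1 < deq)%N ->
      Theta_th dmax alpha cP L deq.-1 <= Theta_EE dmax m beta alpha gamma deq ->
      exists y,
        endemic_equilibrium dmax m beta alpha gamma cP L y /\
        (forall y', endemic_equilibrium dmax m beta alpha gamma cP L y' -> eqD dmax y' y) /\
        Theta dmax m beta y = Theta_th dmax alpha cP L deq.-1 /\
        exists zbar : R, 0 <= zbar <= 1 /\
          forall d, inD dmax d ->
            let s := if (d < deq.-1)%N then 1
                     else if (deq.-1 < d)%N then alpha
                     else zbar + alpha * (1 - zbar) in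
            y d = s * d%:R * Theta_th dmax alpha cP L deq.-1
                  / (gamma + s * d%:R * Theta_th dmax alpha cP L deq.-1))).
Proof.
have hdmax : (1 <= dmax)%N by case/andP: hdmin_D => h1 h2; exact: leq_trans h1 h2.
by apply: main.
Qed.
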